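(* Let $(G,E)$ be a self-similar group bundle and $E_{OS}$ an out-split of $E$ given by $OS=(\pi,\beta)$, with out-split self-similar groupoid action $(G_{OS},E_{OS})$. Then, for $\mu,\nu\in E^{-\infty}$, $\mu$ is asymptotically equivalent to $\nu$ relative to $(G,E)$ if and only if $I(\mu)$ is asymptotically equivalent to $I(\nu)$ relative to $(G_{OS},E_{OS})$. Consequently $(\tilde\sigma,\mathcal{J}_{G,E})$ is topologically conjugate to $(\tilde\sigma,\mathcal{J}_{G_{OS},E_{OS}})$.
   Context: Directed graph $E=(E^0,E^1,r,s)$; finite paths $\mu_1\cdots\mu_n$ with $s(\mu_i)=r(\mu_{i+1})$, $E^*$ all finite paths (vertices included), $vE^*$ paths with range $v$; $E^{-\infty}$ left-infinite paths $\cdots\mu_{-2}\mu_{-1}$ with product topology and shift $\sigma(\cdots\mu_{-2}\mu_{-1})=\cdots\mu_{-3}\mu_{-2}$. A self-similar groupoid action $(G,E)$: $G$ is a groupoid with unit space $E^0$, domain $d$ and codomain $c$, acting faithfully on $E^*$ so that each $g$ is a length-preserving bijection $d(g)E^*\to c(g)E^*$, and for each $g$ and $\mu\in d(g)E^*$ there is $g|_\mu\in G$ with $d(g|_\mu)=s(\mu)$ and $g\cdot(\mu\nu)=(g\cdot\mu)(g|_\mu\cdot\nu)$ for all $\nu\in s(\mu)E^*$. It is a self-similar group bundle if moreover $d(g)=c(g)$ for all $g$ (the action preserves ranges). Out-split: $OS=(\pi,\beta)$ with maps $\pi:E^1\to E^0_{OS}$, $\beta:E^0_{OS}\to E^0$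 satisfying $s=\beta\circ\pi$. The graph $E_{OS}$ has vertices $E^0_{OS}$, edges $E^1_{OS}=\{(v,e)\in E^0_{OS}\times E^1:\beta(v)=r(e)\}$, $r_{OS}(v,e)=v$, $s_{OS}(v,e)=\pi(e)$. $G_{OS}=\{(g,v)\in G\times E^0_{OS}: d(g)=c(g)=\beta(v)\}$ with $(g,v)(g',v)=(gg',v)$, acting by $(g,v)\cdot(v,e)=(v,g\cdot e)$ and $(g,v)|_{(v,e)}=(g|_e,\pi(e))$ (identifying $(g|_e,\pi(e))\in G_{OS}$); this is a self-similar groupoid action on $E_{OS}$. The map $I:E^{-\infty}\to E^{-\infty}_{OS}$ is $I(\cdots e_{-2}e_{-1})=\cdots(\pi(e_{-3}),e_{-2})(\pi(e_{-2}),e_{-1})$. Asymptotic equivalence relative to a self-similar groupoid $(G,E)$: $\mu\sim_{ae}\nu$ in $E^{-\infty}$ iff there are a finite set $F\subseteq G$ and $(g_n)_{n<0}\subseteq F$ with $d(g_n)=r(\mu_n)$ and $g_n\cdot\mu_n\cdots\mu_{-1}=\nu_n\cdots\nu_{-1}$ for all $n<0$. The limit space $\mathcal{J}_{G,E}=E^{-\infty}/\sim_{ae}$ with quotient topology, and $\tilde\sigma$ is the map induced by $\sigma$. *)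

(* Defs.v *)
From Stdlib Require Import List Arith.
Import ListNotations.
Set Implicit Arguments.

(*  acte g e : the action g . e on edges, rese g e : restriction g|_e. *)
(*  The action on finite paths mu_1 ... mu_n (a list, mu_1 at the      *)
(*  head, s(mu_i) = r(mu_(i+1))) is the extension determined by        *)
(*  self-similarity   g.(e mu) = (g.e)(g|_e . mu).                     *)

Fixpoint act_path (Gt Et : Type) (acte : Gt -> Et -> Et) (rese : Gt -> Et -> Gt)
  (g : Gt) (p : list Et) : list Et :=
  match p with
  | [] => []
  | e :: q => acte g e :: act_path acte rese (rese g e) q
  end.

(* finite path with range v (vertex paths correspond to [] ) *)
Fixpoint fin_path (Vt Et : Type) (isedge : Et -> Prop) (rg sc : Et -> Vt)
  (v : Vt) (p : list Et) : Prop :=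
  match p with
  | [] => True
  | e :: q => isedge e /\ rg e = v /\ fin_path isedge rg sc (sc e) q
  end.

(* Left-infinite paths  ... mu_(-2) mu_(-1)  are encoded as
   x : nat -> Et  with  x k = mu_(-(k+1)). *)
Definition linf_path (Vt Et : Type) (isedge : Et -> Prop) (rg sc : Et -> Vt)
  (x : nat -> Et) : Prop :=
  forall k, isedge (x k) /\ sc (x (S k)) = rg (x k).

(* the finite segment  mu_(-(k+1)) ... mu_(-1)  (mu_(-(k+1)) at the head) *)
Definition seg (Et : Type) (x : nat -> Et) (k : nat) : list Et :=
  rev (map x (seq 0 (S k))).

(* the shift  sigma(... mu_(-2) mu_(-1)) = ... mu_(-3) mu_(-2) *)
Definition shift (Et : Type) (x : nat -> Et) : nat -> Et := fun k => x (S k).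

Definition asymp_equiv (Vt Et Gt : Type) (rg : Et -> Vt)
  (inG : Gt -> Prop) (dom : Gt -> Vt)
  (acte : Gt -> Et -> Et) (rese : Gt -> Et -> Gt)
  (mu nu : nat -> Et) : Prop :=
  exists F : list Gt, (forall g, In g F -> inG g) /\
  exists gs : nat -> Gt, forall k,
    In (gs k) F /\ dom (gs k) = rg (mu k) /\
    act_path acte rese (gs k) (seg mu k) = seg nu k.

(* E^{-infty} carries the subspace topology of the product topology on
   Et^nat (Et discrete). *)
Definition path_open (Et : Type) (P : (nat -> Et) -> Prop)
  (U : (nat -> Et) -> Prop) : Prop :=
  forall x, P x -> U x ->
    exists n, forall y, P y -> (forall k, k < n -> y k = x k) -> U y.

Definition cls (Et : Type) (P : (nat -> Et) -> Prop)
  (R : (nat -> Et) -> (nat -> Et) -> Prop) (x : nat -> Et) : (nat -> Et) -> Prop :=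
  fun y => P y /\ R x y.

Definition limit_space (Et : Type) (P : (nat -> Et) -> Prop)
  (R : (nat -> Et) -> (nat -> Et) -> Prop) : ((nat -> Et) -> Prop) -> Prop :=
  fun A => exists x, P x /\ A = cls P R x.

Definition quot_open (Et : Type) (P : (nat -> Et) -> Prop)
  (R : (nat -> Et) -> (nat -> Et) -> Prop)
  (W : ((nat -> Et) -> Prop) -> Prop) : Prop :=
  (forall A, W A -> limit_space P R A) /\
  path_open P (fun x => P x /\ W (cls P R x)).

(* induced map  sigma~ [x] = [sigma x]  (union over representatives) *)
Definition tshift (Et : Type) (P : (nat -> Et) -> Prop)
  (R : (nat -> Et) -> (nat -> Et) -> Prop)
  (A : (nat -> Et) -> Prop) : (nat -> Et) -> Prop :=
  fun y => exists x, A x /\ cls P R (shift x) y.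

Definition top_conjugate (E1 E2 : Type)
  (P1 : (nat -> E1) -> Prop) (R1 : (nat -> E1) -> (nat -> E1) -> Prop)
  (P2 : (nat -> E2) -> Prop) (R2 : (nat -> E2) -> (nat -> E2) -> Prop) : Prop :=
  exists h : ((nat -> E1) -> Prop) -> ((nat -> E2) -> Prop),
    (forall A, limit_space P1 R1 A -> limit_space P2 R2 (h A)) /\
    (forall A B, limit_space P1 R1 A -> limit_space P1 R1 B -> h A = h B -> A = B) /\
    (forall C, limit_space P2 R2 C -> exists A, limit_space P1 R1 A /\ h A = C) /\
    (forall W, quot_open P2 R2 W ->
       quot_open P1 R1 (fun A => limit_space P1 R1 A /\ W (h A))) /\
    (forall W, quot_open P1 R1 W ->
       quot_open P2 R2 (fun C => exists A, W A /\ h A = C)) /\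
    (forall A, limit_space P1 R1 A -> h (tshift P1 R1 A) = tshift P2 R2 (h A)).

Definition self_similar_groupoid (V Ed G : Type) (r s : Ed -> V)
  (d c : G -> V) (gmul : G -> G -> G) (ginv : G -> G) (gid : V -> G)
  (act : G -> Ed -> Ed) (res : G -> Ed -> G) : Prop :=
  (forall v, d (gid v) = v /\ c (gid v) = v) /\
  (forall g h, d g = c h -> d (gmul g h) = d h /\ c (gmul g h) = c g) /\
  (forall g h k, d g = c h -> d h = c k -> gmul (gmul g h) k = gmul g (gmul h k)) /\
  (forall g, gmul (gid (c g)) g = g /\ gmul g (gid (d g)) = g) /\
  (forall g, d (ginv g) = c g /\ c (ginv g) = d g /\
             gmul (ginv g) g = gid (d g) /\ gmul g (ginv g) = gid (c g)) /\
  (forall g e, d g = r e -> r (act g e) = c g) /\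
  (forall g e, d g = r e -> d (res g e) = s e /\ c (res g e) = s (act g e)) /\
  (forall v e, r e = v -> act (gid v) e = e /\ res (gid v) e = gid (s e)) /\
  (forall g h e, d g = c h -> d h = r e ->
     act (gmul g h) e = act g (act h e) /\
     res (gmul g h) e = gmul (res g (act h e)) (res h e)) /\
  (forall g h, d g = d h -> c g = c h ->
     (forall p, fin_path (fun _ => True) r s (d g) p ->
        act_path act res g p = act_path act res h p) -> g = h).

Definition self_similar_group_bundle (V Ed G : Type) (r s : Ed -> V)
  (d c : G -> V) (gmul : G -> G -> G) (ginv : G -> G) (gid : V -> G)
  (act : G -> Ed -> Ed) (res : G -> Ed -> G) : Prop :=
  self_similar_groupoid r s d c gmul ginv gid act res /\ (forall g, d g = c g).

(* Out-split OS = (pi, beta), pi : Ed -> VOS, beta : VOS -> V, s = beta o pi. *)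
(* E_OS: vertices VOS, edges {(v,e) | beta v = r e} (predicate on VOS*Ed), *)
Section OutSplit.
Variables (V Ed G VOS : Type) (r : Ed -> V) (d c : G -> V)
  (act : G -> Ed -> Ed) (res : G -> Ed -> G) (pi : Ed -> VOS) (beta : VOS -> V).

Definition OS_edge (x : VOS * Ed) : Prop := beta (fst x) = r (snd x).
Definition OS_r (x : VOS * Ed) : VOS := fst x.
Definition OS_s (x : VOS * Ed) : VOS := pi (snd x).
Definition OS_G (x : G * VOS) : Prop := d (fst x) = beta (snd x) /\ c (fst x) = beta (snd x).
Definition OS_d (x : G * VOS) : VOS := snd x.
Definition OS_act (x : G * VOS) (y : VOS * Ed) : VOS * Ed := (snd x, act (fst x) (snd y)).
Definition OS_res (x : G * VOS) (y : VOS * Ed) : G * VOS := (res (fst x) (snd y), pi (snd y)).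

(* I(... e_(-2) e_(-1)) = ... (pi(e_(-3)), e_(-2)) (pi(e_(-2)), e_(-1)) *)
Definition OS_I (x : nat -> Ed) : nat -> VOS * Ed := fun k => (pi (x (S k)), x k).
End OutSplit.

(* Main.v *)
Require Import Defs.
From Stdlib Require Import List Arith Lia Classical FunctionalExtensionality PropExtensionality.
Import ListNotations.

Fixpoint lift {Ed VOS : Type} (pi : Ed -> VOS) (w : VOS) (p : list Ed) : list (VOS * Ed) :=
  match p with
  | [] => []
  | e :: q => (w, e) :: lift pi (pi e) q
  end.

Lemma seg_S (Ed : Type) (x : nat -> Ed) k : seg x (S k) = x (S k) :: seg x k.
Proof.
  unfold seg. rewrite (seq_S (S k)), map_app, rev_app_distr. reflexivity.
Qed.

Lemma seg_I (Ed VOS : Type) (pi : Ed -> VOS) (x : nat -> Ed) k :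
  seg (OS_I pi x) k = lift pi (pi (x (S k))) (seg x k).
Proof.
  induction k.
  - reflexivity.
  - rewrite !seg_S, IHk. reflexivity.
Qed.

Lemma map_snd_lift (Ed VOS : Type) (pi : Ed -> VOS) p : forall w,
  map snd (lift pi w p) = p.
Proof. induction p; intros; simpl; f_equal; auto. Qed.

Lemma actA (V Ed G VOS : Type) (r s : Ed -> V) (d : G -> V)
  (act : G -> Ed -> Ed) (res : G -> Ed -> G) (pi : Ed -> VOS)
  (Hres : forall g e, d g = r e -> d (res g e) = s e)
  (Hinv : forall g e, d g = r e -> pi (act g e) = pi e) :
  forall p g v w, fin_path (fun _ => True) r s (d g) p ->
  act_path (OS_act act) (OS_res res pi) (g, v) (lift pi w p)
  = lift pi v (act_path act res g p).
Proof.
  induction p as [|e q IH]; intros g v w Hp; simpl; auto.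
  destruct Hp as [_ [Hr Hq]].
  unfold OS_act, OS_res; simpl.
  rewrite IH. rewrite Hinv by auto. reflexivity.
  rewrite Hres by auto. exact Hq.
Qed.

Lemma fin_seg (V Ed : Type) (r s : Ed -> V) (x : nat -> Ed) :
  linf_path (fun _ => True) r s x -> forall k,
  fin_path (fun _ => True) r s (r (x k)) (seg x k).
Proof.
  intros Hx k; induction k.
  - simpl. auto.
  - rewrite seg_S. simpl. split; auto. split; auto.
    destruct (Hx k) as [_ H]. rewrite H. exact IHk.
Qed.

Lemma filterP (A : Type) (P : A -> Prop) (L : list A) :
  exists L', forall x, In x L' <-> In x L /\ P x.
Proof.
  induction L as [|a L [L' IH]].
  - exists []. simpl. tauto.
  - destruct (classic (P a)) as [Ha|Ha].
    + exists (a :: L'). intro x. simpl. rewrite IH. split.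
      * intros [<-|H]; tauto.
      * intros [[<-|H] HP]; tauto.
    + exists L'. intro x. simpl. rewrite IH. split.
      * tauto.
      * intros [[<-|H] HP]; tauto.
Qed.

Lemma part1 (V Ed G VOS : Type) (r s : Ed -> V)
  (d c : G -> V) (act : G -> Ed -> Ed) (res : G -> Ed -> G)
  (pi : Ed -> VOS) (beta : VOS -> V)
  (HfinVOS : exists lO : list VOS, forall w, In w lO)
  (Hres : forall g e, d g = r e -> d (res g e) = s e)
  (Hdc : forall g, d g = c g)
  (Hos : forall e, s e = beta (pi e))
  (Hinv : forall g e, d g = r e -> pi (act g e) = pi e) :
  forall mu nu : nat -> Ed,
     linf_path (fun _ => True) r s mu -> linf_path (fun _ => True) r s nu ->
     (asymp_equiv r (fun _ => True) d act res mu nu <->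
      asymp_equiv (@OS_r Ed VOS) (OS_G d c beta) (@OS_d G VOS)
        (OS_act act) (OS_res res pi)
        (OS_I pi mu) (OS_I pi nu)).
Proof.
  intros mu nu Hmu Hnu. split.
  - intros [F [_ [gs Hgs]]].
    destruct HfinVOS as [lO HlO].
    destruct (@filterP _ (OS_G d c beta) (flat_map (fun g => map (fun w => (g, w)) lO) F))
      as [F' HF'].
    exists F'. split. { intros x Hx. apply HF' in Hx. tauto. }
    exists (fun k => (gs k, pi (mu (S k)))). intro k.
    destruct (Hgs k) as [Hin [Hd Hact]].
    destruct (Hgs (S k)) as [_ [Hd1 Hact1]].
    assert (Hpi : pi (mu (S k)) = pi (nu (S k))).
    { rewrite !seg_S in Hact1. simpl in Hact1. injection Hact1 as Hh _.
      rewrite <- Hh. symmetry. apply Hinv. exact Hd1. }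
    assert (HG : d (gs k) = beta (pi (mu (S k)))).
    { rewrite <- Hos. destruct (Hmu k) as [_ H]. rewrite H. exact Hd. }
    split; [|split].
    + apply HF'. split.
      * apply in_flat_map. exists (gs k). split; auto.
        apply in_map_iff. exists (pi (mu (S k))). auto.
      * unfold OS_G. simpl. rewrite <- Hdc. auto.
    + reflexivity.
    + rewrite !seg_I. rewrite (@actA _ _ _ _ r s d act res pi Hres Hinv).
      * rewrite Hact, Hpi. reflexivity.
      * rewrite Hd. apply fin_seg. exact Hmu.
  - intros [F' [HF' [gs' Hgs']]].
    exists (map fst F'). split. { auto. }
    exists (fun k => fst (gs' k)). intro k.
    destruct (Hgs' k) as [Hin [Hd Hact]].
    destruct (gs' k) as [g v] eqn:Eg. simpl.
    unfold OS_d, OS_r, OS_I in Hd. simpl in Hd.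
    destruct (HF' _ Hin) as [HG _]. simpl in HG.
    assert (Hdg : d g = r (mu k)).
    { rewrite HG, Hd, <- Hos. destruct (Hmu k) as [_ H]. exact H. }
    split; [|split].
    + apply in_map_iff. exists (g, v). auto.
    + exact Hdg.
    + rewrite !seg_I in Hact. rewrite (@actA _ _ _ _ r s d act res pi Hres Hinv) in Hact.
      * apply (f_equal (map snd)) in Hact. rewrite !map_snd_lift in Hact. exact Hact.
      * rewrite Hdg. apply fin_seg. exact Hmu.
Qed.

Lemma part2 (Ed VOS : Type) (pi : Ed -> VOS)
  (P1 : (nat -> Ed) -> Prop) (R1 : (nat -> Ed) -> (nat -> Ed) -> Prop)
  (P2 : (nat -> VOS * Ed) -> Prop) (R2 : (nat -> VOS * Ed) -> (nat -> VOS * Ed) -> Prop)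
  (HIP2 : forall x, P1 x -> P2 (OS_I pi x))
  (HsP1 : forall z, P2 z -> P1 (fun k => snd (z k)))
  (HIs : forall z, P2 z -> OS_I pi (fun k => snd (z k)) = z)
  (HR : forall x y, P1 x -> P1 y -> (R1 x y <-> R2 (OS_I pi x) (OS_I pi y)))
  (Hsh : forall x, P1 x -> P1 (shift x)) :
  top_conjugate P1 R1 P2 R2.
Proof.
  set (h := fun (A : (nat -> Ed) -> Prop) (z : nat -> VOS * Ed) => P2 z /\ A (fun k => snd (z k))).
  assert (Hhc : forall x, P1 x -> h (cls P1 R1 x) = cls P2 R2 (OS_I pi x)).
  { intros x Hx. apply functional_extensionality. intro z.
    apply propositional_extensionality. unfold h, cls. split.
    - intros [HP2 [HP1 HRz]]. split; auto.
      pose proof (HIs z HP2) as E. rewrite <- E. apply HR; auto.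
    - intros [HP2 HRz]. split; auto. split; auto.
      apply HR; auto. rewrite (HIs z HP2). exact HRz. }
  assert (H1 : forall A, limit_space P1 R1 A -> limit_space P2 R2 (h A)).
  { intros A [x [Hx ->]]. exists (OS_I pi x). split; auto. }
  assert (H2 : forall A B, limit_space P1 R1 A -> limit_space P1 R1 B -> h A = h B -> A = B).
  { intros A B [x [Hx ->]] [y [Hy ->]] Heq.
    apply functional_extensionality. intro w.
    apply propositional_extensionality. split.
    - intros Hw. assert (H : h (cls P1 R1 x) (OS_I pi w)).
      { split. apply HIP2. exact (proj1 Hw). exact Hw. }
      rewrite Heq in H. exact (proj2 H).
    - intros Hw. assert (H : h (cls P1 R1 y) (OS_I pi w)).
      { split. apply HIP2. exact (proj1 Hw). exact Hw. }
      rewrite <- Heq in H. exact (proj2 H). }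
  exists h. split; [exact H1|]. split; [exact H2|]. split; [|split; [|split]].
  - intros C [z [Hz ->]]. exists (cls P1 R1 (fun k => snd (z k))). split.
    + exists (fun k => snd (z k)). split; auto.
    + rewrite Hhc by auto. rewrite HIs by auto. reflexivity.
  - intros W [HW1 HW2]. split.
    + intros A [HA _]. exact HA.
    + intros x Hx [_ [_ HWx]]. rewrite Hhc in HWx by auto.
      destruct (HW2 (OS_I pi x) (HIP2 x Hx) (conj (HIP2 x Hx) HWx)) as [n Hn].
      exists (S n). intros y Hy Hag. split; [exact Hy|]. split.
      * exists y. auto.
      * rewrite Hhc by auto. apply (Hn (OS_I pi y) (HIP2 y Hy)).
        intros k Hk. unfold OS_I. rewrite !Hag by lia. reflexivity.
  - intros W [HW1 HW2]. split.
    + intros C [A [HA <-]]. apply H1. apply HW1. exact HA.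
    + intros z Hz [_ [A [HWA HhA]]].
      destruct (HW1 A HWA) as [x [Hx ->]].
      assert (Ecl : cls P1 R1 (fun k => snd (z k)) = cls P1 R1 x).
      { apply H2. exists (fun k => snd (z k)); auto. exists x; auto.
        rewrite HhA. rewrite Hhc by auto. rewrite HIs by auto. reflexivity. }
      assert (HW : W (cls P1 R1 (fun k => snd (z k)))) by (rewrite Ecl; exact HWA).
      destruct (HW2 _ (HsP1 z Hz) (conj (HsP1 z Hz) HW)) as [n Hn].
      exists n. intros y Hy Hag. split; [exact Hy|].
      exists (cls P1 R1 (fun k => snd (y k))). split.
      * refine (proj2 (Hn _ (HsP1 y Hy) _)). intros k Hk. simpl. rewrite Hag; auto.
      * rewrite Hhc by auto. rewrite HIs by exact Hy. reflexivity.
  - intros A [x [Hx ->]]. apply functional_extensionality. intro z.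
    apply propositional_extensionality. unfold h, tshift, cls. split.
    + intros [Hz [x' [[Hx' Rxx'] [Hsz Rs]]]].
      exists (OS_I pi x'). split.
      * split. apply HIP2; auto. split; auto.
      * split; auto. change (shift (OS_I pi x')) with (OS_I pi (shift x')).
        pose proof (HIs z Hz) as E. rewrite <- E. apply HR; auto.
    + intros [z' [[Hz' [Hsz' Rx]] [Hz Rz]]]. split; auto.
      exists (fun k => snd (z' k)). split. split; auto. split. apply HsP1; auto.
      apply (proj2 (HR _ _ (Hsh _ Hsz') (HsP1 z Hz))).
      change (OS_I pi (shift (fun k => snd (z' k)))) with (shift (OS_I pi (fun k => snd (z' k)))).
      rewrite (HIs z' Hz'), (HIs z Hz). exact Rz.
Qed.

Theorem theorem5p1 (V Ed G VOS : Type) (r s : Ed -> V)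
  (d c : G -> V) (gmul : G -> G -> G) (ginv : G -> G) (gid : V -> G)
  (act : G -> Ed -> Ed) (res : G -> Ed -> G)
  (pi : Ed -> VOS) (beta : VOS -> V)
  (HfinV : exists lV : list V, forall v, In v lV)
  (HfinE : exists lE : list Ed, forall e, In e lE)
  (HfinVOS : exists lO : list VOS, forall w, In w lO)
  (Hssg : self_similar_group_bundle r s d c gmul ginv gid act res)
  (Hos : forall e, s e = beta (pi e))
  (Hinv : forall g e, d g = r e -> pi (act g e) = pi e) :
  (forall mu nu : nat -> Ed,
     linf_path (fun _ => True) r s mu -> linf_path (fun _ => True) r s nu ->
     (asymp_equiv r (fun _ => True) d act res mu nu <->
      asymp_equiv (@OS_r Ed VOS) (OS_G d c beta) (@OS_d G VOS)
        (OS_act act) (OS_res res pi)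
        (OS_I pi mu) (OS_I pi nu))) /\
  top_conjugate
    (linf_path (fun _ => True) r s)
    (asymp_equiv r (fun _ => True) d act res)
    (linf_path (OS_edge r beta) (@OS_r Ed VOS) (OS_s pi))
    (asymp_equiv (@OS_r Ed VOS) (OS_G d c beta) (@OS_d G VOS)
        (OS_act act) (OS_res res pi)).
Proof.
  destruct Hssg as [[_ [_ [_ [_ [_ [_ [H7 _]]]]]]] Hdc].
  assert (Hres : forall g e, d g = r e -> d (res g e) = s e)
    by (intros g e H; exact (proj1 (H7 g e H))).
  pose proof (@part1 _ _ _ _ r s d c act res pi beta HfinVOS Hres Hdc Hos Hinv) as HP1.
  split; [exact HP1|].
  apply (@part2 _ _ pi).
  - intros x Hx k. split.
    + unfold OS_edge, OS_I. simpl. rewrite <- Hos. exact (proj2 (Hx k)).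
    + reflexivity.
  - intros z Hz k. split; [exact I|].
    destruct (Hz k) as [He Hs].
    unfold OS_edge, OS_s, OS_r in *. rewrite Hos. simpl. rewrite Hs. exact He.
  - intros z Hz. apply functional_extensionality. intro k.
    destruct (Hz k) as [_ Hs]. unfold OS_s, OS_r in Hs. unfold OS_I.
    rewrite Hs. destruct (z k); reflexivity.
  - intros x y Hx Hy. apply HP1; auto.
  - intros x Hx k. exact (Hx (S k)).
Qed.
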